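(* Let $a\in[0,1]$ with $a\neq \frac12$, and define $f_a:[0,1]\to[0,1]$ by $$f_a(x)=\begin{cases}(1-2a)x^2+2ax, & x\in[0,\frac13],\\ x, & x\in(\frac13,1].\end{cases}$$ For $x^{(0)}\in[0,1]$ put $x^{(n)}=f_a^n(x^{(0)})$, where $f_a^n$ denotes the $n$-fold composition of $f_a$ with itself. Then: 1. The set of fixed points of $f_a$ is $\{0\}\cup(\frac13,1]$. 2. If $0\le a<\frac12$, then $\lim_{n\to\infty}x^{(n)}=0$ for every $x^{(0)}\in[0,\frac13]$. 3. If $\frac12<a\le 1$, then for every $x^{(0)}\in(0,\frac13]$ there exist $n\in\mathbb N$ and $p\in(\frac13,\frac19(4a+1)]$ such that $f_a^n(x^{(0)})=p$ and $f_a^{n+1}(x^{(0)})=f_a(p)=p$.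
   Context: This map is the reduction to $[0,1]$ (via $y=1-x$) of the quadratic stochastic operator $x'=x^2+2p(x)xy$, $y'=2(1-p(x))xy+y^2$ on the 1-simplex, with $p(x)=a$ for $x\le\frac13$, $p(x)=b$ for $\frac13<x<\frac23$, $p(x)=c$ for $x\ge\frac23$, in the special case $b=c=\frac12$. *)

(* Defs.v *)
From Stdlib Require Import Reals Lra.
Open Scope R_scope.

(* f_a on [0,1]: (1-2a)x^2 + 2ax on [0,1/3], identity on (1/3,1].
   Defined on all of R (the values outside [0,1] are never used). *)
Definition fa (a x : R) : R :=
  if Rle_dec x (1/3) then (1 - 2*a) * x^2 + 2*a*x else x.

Fixpoint fiter (a : R) (n : nat) (x : R) : R :=
  match n with
  | O => x
  | S k => fa a (fiter a k x)
  end.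

(* Main.v *)
Require Import Defs.
From Stdlib Require Import Reals Lra Psatz.
Open Scope R_scope.

Lemma fa_le a x : x <= 1/3 -> fa a x = (1 - 2*a) * x^2 + 2*a*x.
Proof. intros; unfold fa; destruct (Rle_dec x (1/3)); lra. Qed.

Lemma fa_gt a x : 1/3 < x -> fa a x = x.
Proof. intros; unfold fa; destruct (Rle_dec x (1/3)); lra. Qed.

Theorem theorem2p1 (a : R) (ha : 0 <= a <= 1) (ha2 : a <> 1/2) :
  (forall x : R, 0 <= x <= 1 -> (fa a x = x <-> (x = 0 \/ (1/3 < x <= 1))))
  /\ (0 <= a < 1/2 ->
        forall x0 : R, 0 <= x0 <= 1/3 -> Un_cv (fun n => fiter a n x0) 0)
  /\ (1/2 < a <= 1 ->
        forall x0 : R, 0 < x0 <= 1/3 ->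
          exists (n : nat) (p : R),
            1/3 < p <= (4*a + 1)/9 /\
            fiter a n x0 = p /\ fiter a (S n) x0 = fa a p /\ fa a p = p).
Proof.
  split; [|split].
  - intros x Hx; split.
    + intros H. destruct (Rle_dec x (1/3)) as [Hl|Hl].
      * rewrite fa_le in H by lra. left.
        assert (Hf : x * ((1 - 2*a) * (x - 1)) = 0) by (simpl in H; nra).
        apply Rmult_integral in Hf. destruct Hf as [Hf|Hf]; [lra|].
        apply Rmult_integral in Hf. destruct Hf; lra.
      * right; lra.
    + intros [H|H].
      * subst. rewrite fa_le by lra. simpl; ring.
      * apply fa_gt; lra.
  - intros Ha x0 Hx0.
    set (q := (1 + 4*a)/3).
    assert (Inv : forall n, 0 <= fiter a n x0 <= 1/3 /\ fiter a n x0 <= q^n * x0).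
    { induction n as [|n IH]; simpl.
      - lra.
      - destruct IH as [[H1 H2] H3]. set (y := fiter a n x0) in *.
        rewrite fa_le by lra.
        assert (F0 : 0 <= (1-2*a)*y + 2*a) by nra.
        assert (F1 : (1-2*a)*y + 2*a <= q) by (unfold q; nra).
        assert (Hq : q < 1) by (unfold q; lra).
        replace ((1 - 2 * a) * y ^ 2 + 2 * a * y) with (y * ((1-2*a)*y + 2*a)) by ring.
        split; [split|]; try nra; nra. }
    intros eps Heps.
    assert (Hq : Rabs q < 1) by (unfold q; rewrite Rabs_right; lra).
    destruct (pow_lt_1_zero q Hq eps Heps) as [N HN].
    exists N; intros n Hn. unfold R_dist. rewrite Rminus_0_r.
    specialize (HN n Hn). destruct (Inv n) as [[H1 H2] H3].
    rewrite (Rabs_right (fiter a n x0)) in * by lra. rewrite Rabs_right in HN by (apply Rle_ge, pow_le; unfold q; lra).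
    assert (0 <= q^n) by (apply pow_le; unfold q; lra).
    nra.
  - intros Ha x0 Hx0.
    set (r := (4*a + 1)/3).
    assert (Key : forall n, (exists m, fiter a m x0 <= 1/3 /\ 1/3 < fiter a (S m) x0)
                            \/ (fiter a n x0 <= 1/3 /\ r^n * x0 <= fiter a n x0)).
    { induction n as [|n IH].
      - right; simpl; lra.
      - destruct IH as [IH|[H1 H2]]; [left; exact IH|].
        destruct (Rle_dec (fiter a (S n) x0) (1/3)) as [Hl|Hl].
        + right; split; [exact Hl|].
          simpl. simpl in Hl. set (y := fiter a n x0) in *.
          assert (0 < r^n) by (apply pow_lt; unfold r; lra).
          assert (0 < y) by nra.
          rewrite fa_le by lra.
          assert (y * r <= (1 - 2 * a) * y ^ 2 + 2 * a * y) by (unfold r; simpl; assert (0 <= y * ((2*a-1)*(1/3-y))) by (apply Rmult_le_pos; nra); nra).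
          unfold r in *; nra.
        + left; exists n; split; lra. }
    assert (Hr : Rabs r > 1) by (unfold r; rewrite Rabs_right; lra).
    destruct (Pow_x_infinity r Hr (1/x0)) as [N HN].
    specialize (HN N (Nat.le_refl N)).
    assert (0 < r^N) by (apply pow_lt; unfold r; lra).
    rewrite Rabs_right in HN by lra.
    assert (Hb : 1 <= r^N * x0).
    { apply Rge_le, (Rmult_le_compat_r x0) in HN; [|lra].
      replace (1/x0 * x0) with 1 in HN by (field; lra). lra. }
    destruct (Key N) as [[m [Hm1 Hm2]]|[H1 H2]]; [|lra].
    exists (S m), (fiter a (S m) x0).
    assert (Hfix : fa a (fiter a (S m) x0) = fiter a (S m) x0) by (apply fa_gt; lra).
    split; [|split; [reflexivity|split; [reflexivity|exact Hfix]]].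
    split; [exact Hm2|].
    assert (Hpos : forall k, 0 <= fiter a k x0).
    { induction k; simpl; [lra|].
      destruct (Rle_dec (fiter a k x0) (1/3)).
      - rewrite fa_le by lra. nra.
      - rewrite fa_gt by lra. lra. }
    simpl. specialize (Hpos m). set (y := fiter a m x0) in *.
    rewrite fa_le by lra.
    assert (0 <= (1/3 - y) * ((1-2*a)*(1/3 + y) + 2*a)) by (apply Rmult_le_pos; [lra| assert (0 <= (2*a-1)*(1/3-y)) by (apply Rmult_le_pos; lra); nra]).
    nra.
Qed.
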